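(* Consider {\L}ukasiewicz real-valued logic, in which the disjunction $\lor$ has $f_\lor(a,b)=\min\{1,a+b\}$, and let $A_1,A_2$ be distinct atomic propositions. There is no finite Boolean combination (built with classical $\land,\lor,\neg$ over sentences) of sentences of the form $(A_1,S)$ or $(A_2,S)$, with $S\subseteq[0,1]$ arbitrary, that is equivalent to the sentence $(A_1\lor A_2,\{0.5\})$ (i.e., has exactly the same models).
   Context: Setting (real-valued logic). Fix a finite set of atomic propositions, a finite set of binary connectives and a finite set of unary connectives. Each binary connective $\alpha$ comes with a function $f_\alpha:[0,1]^2\to[0,1]$ and each unary connective $\rho$ with a function $f_\rho:[0,1]\to[0,1]$. Formulas are built recursively from atomic propositions using the connectives. A model $M$ assigns a value in $[0,1]$ to each atomic proposition; the value of a compound formula is computed recursively via $f_\alpha$, $f_\rho$. A sentence is $(\sigma_1,\ldots,\sigma_k,S)$ with pairwise distinct formulas $\sigma_i$ and $S\subseteq[0,1]^k$; $M$ satisfies it if the tuple of values of $\sigma_1,\ldots,\sigma_k$ in $M$ lies in $S$. A Boolean combination of sentences is satisfied by $M$ according to the classical truth-table reading of $\land,\lor,\neg$ applied to the satisfaction of its constituent sentences. *)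

(* Defs.v *)
From Stdlib Require Export Reals List.
Open Scope R_scope.

Inductive formula (Atom : Type) : Type :=
| FAtom : Atom -> formula Atom
| FOr : formula Atom -> formula Atom -> formula Atom
| FNeg : formula Atom -> formula Atom.
Arguments FAtom {Atom} _.
Arguments FOr {Atom} _ _.
Arguments FNeg {Atom} _.

Definition is_model {Atom : Type} (M : Atom -> R) : Prop :=
  forall a, 0 <= M a <= 1.

Fixpoint fval {Atom : Type} (M : Atom -> R) (f : formula Atom) : R :=
  match f with
  | FAtom a => M a
  | FOr f g => Rmin 1 (fval M f + fval M g)
  | FNeg f => 1 - fval M f
  end.

(* Finite Boolean combinations of one-formula sentences (sigma, S). *)
Inductive bcomb (Atom : Type) : Type :=
| BSent : formula Atom -> (R -> Prop) -> bcomb Atom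
| BAnd : bcomb Atom -> bcomb Atom -> bcomb Atom
| BOr : bcomb Atom -> bcomb Atom -> bcomb Atom
| BNot : bcomb Atom -> bcomb Atom.
Arguments BSent {Atom} _ _.
Arguments BAnd {Atom} _ _.
Arguments BOr {Atom} _ _.
Arguments BNot {Atom} _.

Fixpoint bsat {Atom : Type} (M : Atom -> R) (b : bcomb Atom) : Prop :=
  match b with
  | BSent f T => T (fval M f)
  | BAnd b1 b2 => bsat M b1 /\ bsat M b2
  | BOr b1 b2 => bsat M b1 \/ bsat M b2
  | BNot b1 => ~ bsat M b1
  end.

Fixpoint only_atoms12 {Atom : Type} (A1 A2 : Atom) (b : bcomb Atom) : Prop :=
  match b with
  | BSent f T =>
      (f = FAtom A1 \/ f = FAtom A2) /\ (forall x, T x -> 0 <= x <= 1)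
  | BAnd b1 b2 => only_atoms12 A1 A2 b1 /\ only_atoms12 A1 A2 b2
  | BOr b1 b2 => only_atoms12 A1 A2 b1 /\ only_atoms12 A1 A2 b2
  | BNot b1 => only_atoms12 A1 A2 b1
  end.

(* Main.v *)
Require Import Defs.
From Stdlib Require Import Lra Classical ClassicalEpsilon.

Definition infin (D : R -> Prop) : Prop :=
  forall l : list R, exists x, D x /\ ~ In x l.

Lemma split_inf (D S : R -> Prop) : infin D ->
  infin (fun x => D x /\ S x) \/ infin (fun x => D x /\ ~ S x).
Proof.
  intros HD. destruct (classic (infin (fun x => D x /\ S x))) as [H|H]; [left; auto|right].
  intros l2. destruct (classic (exists x, (D x /\ ~ S x) /\ ~ In x l2)) as [E|E]; auto.
  exfalso. unfold infin in H. apply not_all_ex_not in H. destruct H as [l1 H].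
  destruct (HD (l1 ++ l2)) as [x [Dx Nx]]. apply Nx, in_or_app.
  destruct (classic (S x)) as [Sx|Sx].
  - left. apply NNPP; intro Hn. apply H. exists x; auto.
  - right. apply NNPP; intro Hn. apply E. exists x; auto.
Qed.

Lemma key (Atom : Type) (A1 A2 : Atom) (b : bcomb Atom) :
  only_atoms12 A1 A2 b -> forall D, infin D ->
  exists D', (forall x, D' x -> D x) /\ infin D' /\
    forall M M' : Atom -> R, D' (M A1) -> D' (M' A1) -> M A2 = M' A2 ->
      (bsat M b <-> bsat M' b).
Proof.
  induction b as [f T|b1 IH1 b2 IH2|b1 IH1 b2 IH2|b1 IH1]; simpl; intros Hb D HD.
  - destruct Hb as [[-> | ->] _].
    + destruct (split_inf D T HD) as [H|H].
      * exists (fun x => D x /\ T x); split; [intros x [? ?]; auto|split; [exact H|]].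
        intros M M' [_ h1] [_ h2] _; tauto.
      * exists (fun x => D x /\ ~ T x); split; [intros x [? ?]; auto|split; [exact H|]].
        intros M M' [_ h1] [_ h2] _; tauto.
    + exists D; split; [auto|split; [exact HD|]]. intros M M' _ _ E; simpl; rewrite E; tauto.
  - destruct Hb as [Hb1 Hb2].
    destruct (IH1 Hb1 D HD) as [D1 [s1 [i1 p1]]].
    destruct (IH2 Hb2 D1 i1) as [D2 [s2 [i2 p2]]].
    exists D2; split; [auto|split; [exact i2|]].
    intros M M' h1 h2 h3; specialize (p1 M M' (s2 _ h1) (s2 _ h2) h3);
      specialize (p2 M M' h1 h2 h3); tauto.
  - destruct Hb as [Hb1 Hb2].
    destruct (IH1 Hb1 D HD) as [D1 [s1 [i1 p1]]].
    destruct (IH2 Hb2 D1 i1) as [D2 [s2 [i2 p2]]].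
    exists D2; split; [auto|split; [exact i2|]].
    intros M M' h1 h2 h3; specialize (p1 M M' (s2 _ h1) (s2 _ h2) h3);
      specialize (p2 M M' h1 h2 h3); tauto.
  - destruct (IH1 Hb D HD) as [D1 [s1 [i1 p1]]].
    exists D1; split; [auto|split; [exact i1|]]; intros M M' h1 h2 h3; specialize (p1 M M' h1 h2 h3); tauto.
Qed.

Lemma interval_inf : forall l : list R, forall a b, a < b ->
  exists x, a < x < b /\ ~ In x l.
Proof.
  induction l as [|y l IH]; intros a b Hab.
  - exists ((a+b)/2); split; [lra|simpl; auto].
  - destruct (IH a ((a+b)/2) ltac:(lra)) as [z [Hz Nz]].
    destruct (Req_dec z y) as [->|Hne].
    + destruct (IH ((a+b)/2) b ltac:(lra)) as [w [Hw Nw]].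
      exists w; split; [lra|]. simpl; intros [E|E]; [lra|auto].
    + exists z; split; [lra|]. simpl; intros [E|E]; [congruence|auto].
Qed.

Theorem theorem1 (Atom : Type) (Hfin : exists l : list Atom, forall a, In a l)
  (A1 A2 : Atom) (Hneq : A1 <> A2) :
  ~ exists b : bcomb Atom,
      only_atoms12 A1 A2 b /\
      forall M : Atom -> R, is_model M ->
        (bsat M b <-> fval M (FOr (FAtom A1) (FAtom A2)) = 1/2).
Proof.
  intros [b [Hb Hs]].
  set (D := fun x => 0 < x < 1/2).
  assert (HD : infin D) by (intro l; destruct (interval_inf l 0 (1/2)) as [x [? ?]];
    [lra| exists x; split; auto]).
  destruct (key Atom A1 A2 b Hb D HD) as [D' [sD [iD pD]]].
  destruct (iD nil) as [x [Dx _]].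
  destruct (iD (x :: nil)) as [x' [Dx' Nx']].
  assert (Hxx : x' <> x) by (intro E; apply Nx'; simpl; auto).
  pose proof (sD _ Dx) as Ex. pose proof (sD _ Dx') as Ex'. unfold D in Ex, Ex'.
  set (M := fun c => if excluded_middle_informative (c = A1) then x else 1/2 - x).
  set (M' := fun c => if excluded_middle_informative (c = A1) then x' else 1/2 - x).
  assert (MA1 : M A1 = x) by (unfold M; destruct excluded_middle_informative; congruence).
  assert (MA2 : M A2 = 1/2 - x) by (unfold M; destruct excluded_middle_informative; congruence).
  assert (M'A1 : M' A1 = x') by (unfold M'; destruct excluded_middle_informative; congruence).
  assert (M'A2 : M' A2 = 1/2 - x) by (unfold M'; destruct excluded_middle_informative; congruence).
  assert (mM : is_model M) by (intro c; unfold M; destruct excluded_middle_informative; lra).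
  assert (mM' : is_model M') by (intro c; unfold M'; destruct excluded_middle_informative; lra).
  assert (H1 : bsat M b).
  { apply (Hs M mM). simpl. rewrite MA1, MA2. unfold Rmin; destruct Rle_dec; lra. }
  assert (H2 : bsat M' b).
  { apply (pD M M'); [rewrite MA1; auto|rewrite M'A1; auto|congruence|auto]. }
  apply (Hs M' mM') in H2. simpl in H2. rewrite M'A1, M'A2 in H2.
  unfold Rmin in H2; destruct Rle_dec; lra.
Qed.
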